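(* A matrix $A\in\mathcal{B}$ lies in $\ker\overline{\phi}$ if and only if $A=\beta(\Delta)^k$ for some $k\in\mathbb{Z}$, where $\Delta=(\sigma_1\sigma_2\sigma_1)^2$.
   Context: Let $B_3$ be the braid group with standard generators $\sigma_1,\sigma_2$ and $\beta$ the Burau representation $\beta(\sigma_1)=\begin{pmatrix}1-t&t&0\\1&0&0\\0&0&1\end{pmatrix}$, $\beta(\sigma_2)=\begin{pmatrix}1&0&0\\0&1-t&t\\0&1&0\end{pmatrix}$. For a matrix $A$ with Laurent polynomial entries, $\overline{A}$ denotes substitution $t\mapsto t^{-1}$ in every entry. Let $J_3=\begin{pmatrix}1&-t^{-1}&-t^{-1}\\-t&1&-t^{-1}\\-t&-t&1\end{pmatrix}$, $v=(t,t^2,t^3)$ (a row vector), $\vec{1}=(1,1,1)^T$, and $\mathcal{B}=\{A\in\mathrm{GL}(3,\mathbb{Z}[t,t^{-1}]) : vA=v,\ A\vec 1=\vec 1,\ \overline{A}J_3A^T=J_3\}$. For $A=(A_{ij})\in\mathcal{B}$ put, for $k=1,2$, $f_{k1}=A_{k1}(1+t+t^2)-1$, $f_{k2}=A_{k1}+A_{k2}(1+t)-1$, $g_{kl}=f_{kl}/(t(1+t))$, and $\phi(A)=\begin{pmatrix}g_{11}&g_{12}\\ t^{-1}g_{11}+(1+t)g_{21}& t^{-1}g_{12}+(1+t)g_{22}\end{pmatrix}$. Let $\overline{\phi}=\pi\circ\phi$ with $\pi:\mathrm{GL}(2,\mathbb{Q}(t))\to\mathrm{PGL}(2,\mathbb{Q}(t))$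 the projection. *)

(* Defs.v *)
From HB Require Import structures.
From mathcomp Require Import all_boot all_order all_algebra.
Set Implicit Arguments. Unset Strict Implicit. Unset Printing Implicit Defensive.
Import Order.TTheory GRing.Theory Num.Theory.
Local Open Scope ring_scope.

Definition K : Type := {fraction {poly rat}}.
Definition tK : K := tofrac 'X.

Definition laurent (x : K) : Prop :=
  exists (p : {poly int}) (n : nat),
    x = tofrac (map_poly (fun z : int => z%:~R : rat) p) / tK ^+ n.

(* The involution t |-> t^-1 on Q(t): evaluate numerator and denominator of
   a representative fraction at t^-1. *)
Definition barK (x : K) : K :=
  let r := repr x in
  (map_poly (fun c : rat => @tofrac _ c%:P) (frac r).1).[tK^-1] / (map_poly (fun c : rat => @tofrac _ c%:P) (frac r).2).[tK^-1].

Definition barM (A : 'M[K]_3) : 'M[K]_3 := map_mx barK A.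

Definition GL3_laurent (A : 'M[K]_3) : Prop :=
  (forall i j, laurent (A i j)) /\ A \in unitmx /\
  (forall i j, laurent (invmx A i j)).

Definition J3 : 'M[K]_3 :=
  \matrix_(i < 3, j < 3)
    (if i == j then 1 else if (i < j)%N then - tK^-1 else - tK).

Definition vrow : 'rV[K]_3 := \row_(j < 3) tK ^+ j.+1.
Definition ones : 'cV[K]_3 := \col_(i < 3) 1.

Definition in_B (A : 'M[K]_3) : Prop :=
  GL3_laurent A /\ vrow *m A = vrow /\ A *m ones = ones /\
  barM A *m J3 *m A^T = J3.

(* Entries with the paper's 1-based indices: Aij i j = A_{ij}. *)
Definition Aij (A : 'M[K]_3) (i j : nat) : K := A (inord i.-1) (inord j.-1).

Definition f_ (A : 'M[K]_3) (k l : nat) : K :=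
  if l == 1%N then Aij A k 1 * (1 + tK + tK ^+ 2) - 1
  else Aij A k 1 + Aij A k 2 * (1 + tK) - 1.

Definition g_ (A : 'M[K]_3) (k l : nat) : K := f_ A k l / (tK * (1 + tK)).

Definition phi (A : 'M[K]_3) : 'M[K]_2 :=
  \matrix_(i < 2, j < 2)
    (if i == 0 :> nat then g_ A 1 j.+1
     else tK^-1 * g_ A 1 j.+1 + (1 + tK) * g_ A 2 j.+1).

(* A lies in the kernel of phi-bar = pi o phi : phi(A) is trivial in PGL(2,Q(t)),
   i.e. a nonzero scalar matrix. *)
Definition in_ker_phibar (A : 'M[K]_3) : Prop :=
  exists c : K, c != 0 /\ phi A = c%:M.

Definition beta_s1 : 'M[K]_3 :=
  \matrix_(i < 3, j < 3)
    nth 0 (nth [::] [:: [:: 1 - tK; tK; 0]; [:: 1; 0; 0]; [:: 0; 0; 1]] i) j.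
Definition beta_s2 : 'M[K]_3 :=
  \matrix_(i < 3, j < 3)
    nth 0 (nth [::] [:: [:: 1; 0; 0]; [:: 0; 1 - tK; tK]; [:: 0; 1; 0]] i) j.

Definition beta_Delta : 'M[K]_3 := (beta_s1 *m beta_s2 *m beta_s1) ^+ 2.

(* Main.v *)
Require Import Defs.
From HB Require Import structures.
From mathcomp Require Import all_boot all_order all_algebra.
Import GRing.Theory.
Local Open Scope ring_scope.
From mathcomp Require Import ring zify.
Import Num.Theory.

Section Gen.
Variable F : fieldType.
Variable t : F.
Hypothesis t0 : t != 0.
Hypothesis t1 : 1 + t != 0.
Hypothesis tD : 1 + t + t ^+ 2 != 0.

Definition Mc (c : F) : 'M[F]_3 :=
  \matrix_(i < 3, j < 3) ((i == j)%:R * c + (1 - c) * t ^+ j / (1 + t + t ^+ 2)).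
Definition Mb (c : F) : 'M[F]_3 :=
  \matrix_(i < 3, j < 3) ((i == j)%:R * c + (1 - c) * t^-1 ^+ j / (1 + t^-1 + t^-1 ^+ 2)).
Definition J' : 'M[F]_3 :=
  \matrix_(i < 3, j < 3)
    (if i == j then 1 else if (i < j)%N then - t^-1 else - t).
Definition vrow' : 'rV[F]_3 := \row_(j < 3) t ^+ j.+1.
Definition ones' : 'cV[F]_3 := \col_(i < 3) 1.
Definition Aij' (A : 'M[F]_3) (i j : nat) : F := A (inord i.-1) (inord j.-1).
Definition f' (A : 'M[F]_3) (k l : nat) : F :=
  if l == 1%N then Aij' A k 1 * (1 + t + t ^+ 2) - 1
  else Aij' A k 1 + Aij' A k 2 * (1 + t) - 1.
Definition g' (A : 'M[F]_3) (k l : nat) : F := f' A k l / (t * (1 + t)).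
Definition phi' (A : 'M[F]_3) : 'M[F]_2 :=
  \matrix_(i < 2, j < 2)
    (if i == 0 :> nat then g' A 1 j.+1
     else t^-1 * g' A 1 j.+1 + (1 + t) * g' A 2 j.+1).
Definition bs1 : 'M[F]_3 :=
  \matrix_(i < 3, j < 3)
    nth 0 (nth [::] [:: [:: 1 - t; t; 0]; [:: 1; 0; 0]; [:: 0; 0; 1]] i) j.
Definition bs2 : 'M[F]_3 :=
  \matrix_(i < 3, j < 3)
    nth 0 (nth [::] [:: [:: 1; 0; 0]; [:: 0; 1 - t; t]; [:: 0; 1; 0]] i) j.

Ltac ord3 i := let H := fresh "H" in case: i => [[|[|[|?]]] H] //.

Lemma McM c d : Mc c *m Mc d = Mc (c * d).
Proof.
apply/matrixP => i j; rewrite !mxE !big_ord_recr big_ord0 /= !mxE.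
ord3 i; ord3 j => /=.
all: field; done.
Qed.

Lemma Mc1 : Mc 1 = 1.
Proof.
apply/matrixP => i j; rewrite !mxE subrr mul0r mul0r addr0 mulr1 //.
Qed.

Lemma Delta_Mc : (bs1 *m bs2 *m bs1) ^+ 2 = Mc (t ^+ 3).
Proof.
rewrite expr2 -mulmxE.
apply/matrixP => i j; rewrite !mxE !big_ord_recr big_ord0 /= !mxE.
rewrite !big_ord_recr !big_ord0 /= !mxE.
rewrite !big_ord_recr !big_ord0 /= !mxE.
ord3 i; ord3 j => /=.
all: field; done.
Qed.

Lemma inord0 : (inord 0 : 'I_3) = Ordinal (isT : (0 < 3)%N).
Proof. by apply: val_inj; rewrite /= inordK. Qed.
Lemma inord1 : (inord 1 : 'I_3) = Ordinal (isT : (1 < 3)%N).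
Proof. by apply: val_inj; rewrite /= inordK. Qed.

Lemma phiMc c : phi' (Mc c) = c%:M.
Proof.
apply/matrixP => i j; rewrite !mxE /g' /f' /Aij' /= !inord0 !inord1 !mxE /=.
case: i => [[|[|?]] H] //; case: j => [[|[|?]] H'] //=.
all: rewrite ?mulr1n ?mulr0n; field; by rewrite ?t0 ?t1 ?tD.
Qed.

Lemma unit_Mc c cb : Mb cb *m J' *m (Mc c)^T = J' -> c * cb = 1.
Proof.
move/matrixP/(_ ord0 ord0).
rewrite !mxE !big_ord_recr !big_ord0 /= !mxE !big_ord_recr !big_ord0 /= !mxE /=.
move/(congr1 (fun z => (z - 1) * ((1 + t + t ^+ 2) / (1 + t) ^+ 2))).
rewrite (subrr (1 : F)) (mul0r ((1 + t + t ^+ 2) / (1 + t) ^+ 2)) => H.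
apply/eqP; rewrite -subr_eq0; apply/eqP; rewrite -H.
field; by rewrite ?t0 ?t1 ?tD.
Qed.


Lemma lin1 (x y L R k : F) : L = R -> x - y = k * (L - R) -> x = y.
Proof. by move=> -> /eqP; rewrite subrr mulr0 subr_eq0 => /eqP. Qed.

Lemma solve_Mc (A : 'M[F]_3) c :
  vrow' *m A = vrow' -> A *m ones' = ones' -> phi' A = c%:M -> A = Mc c.
Proof.
pose a (i j : nat) : F := A (inord i) (inord j).
have eA : A = \matrix_(i < 3, j < 3) a i j.
  by apply/matrixP => i j; rewrite mxE /a !inord_val.
rewrite eA => H1 H2 H3.
have h00 := congr1 (fun M : 'M[F]_2 => M ord0 ord0) H3.
have h01 := congr1 (fun M : 'M[F]_2 => M ord0 (Ordinal (isT : (1 < 2)%N))) H3.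
have h10 := congr1 (fun M : 'M[F]_2 => M (Ordinal (isT : (1 < 2)%N)) ord0) H3.
have h11 := congr1 (fun M : 'M[F]_2 => M (Ordinal (isT : (1 < 2)%N)) (Ordinal (isT : (1 < 2)%N))) H3.
have v0 := congr1 (fun M : 'rV[F]_3 => M ord0 ord0) H1.
have v1 := congr1 (fun M : 'rV[F]_3 => M ord0 (Ordinal (isT : (1 < 3)%N))) H1.
have r0 := congr1 (fun M : 'cV[F]_3 => M ord0 ord0) H2.
have r1 := congr1 (fun M : 'cV[F]_3 => M (Ordinal (isT : (1 < 3)%N)) ord0) H2.
have r2 := congr1 (fun M : 'cV[F]_3 => M (Ordinal (isT : (2 < 3)%N)) ord0) H2.
move: h00 h01 h10 h11 v0 v1 r0 r1 r2.
rewrite /phi' /g' /f' /Aij' /= !mxE /= !inord0 !inord1 /=.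
rewrite !big_ord_recr !big_ord0 /= !mxE /=.
rewrite ?mulr1n ?mulr0n.
move=> h00 h01 h10 h11 v0 v1 r0 r1 r2.
have e00 : a 0 0 = (1 + c * (t * (1 + t))) / (1 + t + t ^+ 2).
  apply: (lin1 _ _ _ _ ((t * (1 + t)) / (1 + t + t ^+ 2)) h00).
  field; by rewrite ?t0 ?t1 ?tD.
rewrite e00 in h01 h10 h11 v0 r0.
have e01 : a 0 1 = t * (1 - c) / (1 + t + t ^+ 2).
  apply: (lin1 _ _ _ _ t h01).
  field; by rewrite ?t0 ?t1 ?tD.
rewrite e01 in h11 v1 r0.
have e10 : a 1 0 = (1 - c) / (1 + t + t ^+ 2).
  apply: (lin1 _ _ _ _ (t / (1 + t + t ^+ 2)) h10).
  field; by rewrite ?t0 ?t1 ?tD.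
rewrite e10 in h11 v0 r1.
have e11 : a 1 1 = (t + c * (1 + t ^+ 2)) / (1 + t + t ^+ 2).
  apply: (lin1 _ _ _ _ (t / (1 + t)) h11).
  field; by rewrite ?t0 ?t1 ?tD.
rewrite e11 in v1 r1.
have e02 : a 0 2 = (1 - c) * t ^+ 2 / (1 + t + t ^+ 2).
  apply: (lin1 _ _ _ _ 1 r0).
  field; by rewrite ?t0 ?t1 ?tD.
have e12 : a 1 2 = (1 - c) * t ^+ 2 / (1 + t + t ^+ 2).
  apply: (lin1 _ _ _ _ 1 r1).
  field; by rewrite ?t0 ?t1 ?tD.
have e20 : a 2 0 = (1 - c) / (1 + t + t ^+ 2).
  apply: (lin1 _ _ _ _ (t ^-3) v0).
  field; by rewrite ?t0 ?t1 ?tD.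
have e21 : a 2 1 = (1 - c) * t / (1 + t + t ^+ 2).
  apply: (lin1 _ _ _ _ (t ^-3) v1).
  field; by rewrite ?t0 ?t1 ?tD.
rewrite e20 e21 in r2.
have e22 : a 2 2 = (t ^+ 2 + c * (1 + t)) / (1 + t + t ^+ 2).
  apply: (lin1 _ _ _ _ 1 r2).
  field; by rewrite ?t0 ?t1 ?tD.
apply/matrixP => i j; rewrite !mxE.
ord3 i; ord3 j => /=.
all: rewrite ?e00 ?e01 ?e02 ?e10 ?e11 ?e12 ?e20 ?e21 ?e22.
all: field; by rewrite ?t0 ?t1 ?tD.
Qed.


Lemma c_form (c m D T : F) : D != 0 -> T != 0 -> (1 - c) / D = m / T -> c = (T - D * m) / T.
Proof. move=> hD hT h; apply: (lin1 _ _ _ _ (- D) h); field; by rewrite ?hD ?hT. Qed.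

End Gen.


Section FracSec.
Local Open Scope quotient_scope.
Lemma fracE (x : K) : x = tofrac (\n_(repr x)) / tofrac (\d_(repr x)).
Proof.
rewrite -[x in LHS]reprK.
move: (repr x) => r.
have hd := denom_ratioP r.
have E : (\pi_K r) * tofrac r.2 = tofrac r.1.
  unlock tofrac.
  have E := FracField.pi_mul r (Ratio r.2 1).
  apply: etrans (esym E) _.
  apply/eqmodP => /=.
  rewrite FracField.equivfE /FracField.mulf /= !numden_Ratio ?mulf_neq0 ?oner_neq0 //.
  by rewrite !mulr1 mulrC.
by rewrite -E mulfK // tofrac_eq0.
Qed.
End FracSec.


Definition ev (p : {poly rat}) : K :=
  (map_poly (fun c : rat => @tofrac _ c%:P) p).[tK^-1].

Lemma tK_neq0 : tK != 0.
Proof. by rewrite /tK tofrac_eq0 polyX_eq0. Qed.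

Lemma evE p : ev p = (map_poly (@tofrac _ \o polyC) p).[tK^-1].
Proof. by []. Qed.

Lemma evD p q : ev (p + q) = ev p + ev q.
Proof. by rewrite !evE rmorphD hornerD. Qed.
Lemma evM p q : ev (p * q) = ev p * ev q.
Proof. by rewrite !evE rmorphM hornerM. Qed.
Lemma ev1 : ev 1 = 1.
Proof. by rewrite evE rmorph1 hornerC. Qed.
Lemma evX : ev 'X = tK^-1.
Proof. by rewrite evE map_polyX hornerX. Qed.
Lemma evC a : ev a%:P = tofrac a%:P.
Proof. by rewrite evE map_polyC hornerC. Qed.

Lemma ev_rev q : ev q * tK ^+ (size q).-1 =
  tofrac (\sum_(i < size q) q`_i *: 'X^((size q).-1 - i)).
Proof.
set n := (size q).-1.
rewrite evE horner_coef size_map_poly mulr_suml rmorph_sum /=.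
apply: eq_bigr => i _.
rewrite coef_map /= -mul_polyC rmorphM rmorphXn /= -mulrA; congr (_ * _).
have lein : (i <= n)%N by rewrite /n -ltnS prednK // (leq_ltn_trans _ (ltn_ord i)).
rewrite exprVn (_ : tofrac _ = tK) //.
have -> : tK ^+ n = tK ^+ (n - i) * tK ^+ i by rewrite -exprD subnK.
by rewrite mulrCA mulVf ?expf_neq0 ?tK_neq0 // mulr1.
Qed.

Lemma ev_neq0 q : q != 0 -> ev q != 0.
Proof.
move=> q0.
set n := (size q).-1.
have sq : size q = n.+1 by rewrite /n prednK // size_poly_gt0.
pose rq : {poly rat} := \sum_(i < size q) q`_i *: 'X^(n - i).
have E : ev q * tK ^+ n = tofrac rq.
  rewrite evE horner_coef size_map_poly mulr_suml /rq rmorph_sum /=.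
  apply: eq_bigr => i _.
  rewrite coef_map /= -mul_polyC rmorphM rmorphXn /= -mulrA; congr (_ * _).
  have lein : (i <= n)%N by rewrite -ltnS -sq.
  rewrite exprVn (_ : tofrac _ = tK) //.
  have -> : tK ^+ n = tK ^+ (n - i) * tK ^+ i by rewrite -exprD subnK.
  by rewrite mulrCA mulVf ?expf_neq0 ?tK_neq0 // mulr1.
apply/negP => /eqP ev0.
move: E; rewrite ev0 mul0r => /esym/eqP; rewrite tofrac_eq0 => /eqP rq0.
have := congr1 (fun p : {poly rat} => p`_0) rq0.
rewrite coef0 /rq coef_sum sq big_ord_recr /= subnn expr0 alg_polyC coefC eqxx.
rewrite big1 ?add0r => [|i _]; last first.
  rewrite coefZ coefXn.
  have : (0 < n - i)%N by rewrite subn_gt0.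
  by case: (n - i)%N => // k _; rewrite mulr0.
move/eqP; rewrite -/n.
have <- : lead_coef q = q`_n by rewrite lead_coefE.
by rewrite lead_coef_eq0 (negPf q0).
Qed.

Lemma barK_frac p q : q != 0 -> barK (tofrac p / tofrac q) = ev p / ev q.
Proof.
move=> q0.
set x := tofrac p / tofrac q.
have hx := fracE x.
rewrite /barK -/(ev _) -/(ev _).
set a := (frac (repr x)).1 in hx *; set b := (frac (repr x)).2 in hx *.
have b0 : b != 0 by exact: denom_ratioP.
have : tofrac a / tofrac b == tofrac p / tofrac q by rewrite -hx.
rewrite eqr_div ?tofrac_eq0 // -!rmorphM /= tofrac_eq => /eqP E.
apply/eqP; rewrite eqr_div ?ev_neq0 // -!evM E //.
Qed.


Lemma evN p : ev (- p) = - ev p.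
Proof. by rewrite !evE rmorphN hornerN. Qed.

Lemma tofrac1K : tofrac (1 : {poly rat}) = 1 :> K.
Proof. exact: tofrac1. Qed.

Lemma barK_tofrac p : barK (tofrac p) = ev p.
Proof.
have := @barK_frac p 1 (oner_neq0 _).
by rewrite tofrac1K !divr1 ev1 divr1.
Qed.

Lemma fracE' (x : K) : exists p q, q != 0 /\ x = tofrac p / tofrac q.
Proof. exists (frac (repr x)).1, (frac (repr x)).2; split; [exact: denom_ratioP | exact: fracE]. Qed.

Lemma barB : zmod_morphism barK.
Proof.
move=> x y.
have [p [q [q0 ->]]] := fracE' x.
have [r [s [s0 ->]]] := fracE' y.
have q0' : tofrac q != 0 by rewrite tofrac_eq0.
have s0' : tofrac s != 0 by rewrite tofrac_eq0.
Time rewrite -mulNr.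
Time rewrite (addf_div _ _ q0' s0').
Time rewrite -!rmorphN -!rmorphM -rmorphD /=.
rewrite (barK_frac _ _ (mulf_neq0 q0 s0)) (barK_frac _ _ q0) (barK_frac _ _ s0).
have eq0 := @ev_neq0 q q0; have es0 := @ev_neq0 s s0.
rewrite -mulNr (addf_div _ _ eq0 es0) -!evM evD (evM (- r)) evN.
by [].
Qed.

Lemma barMul : monoid_morphism barK.
Proof.
split.
  by rewrite -tofrac1K barK_tofrac ev1.
move=> x y.
have [p [q [q0 ->]]] := fracE' x.
have [r [s [s0 ->]]] := fracE' y.
rewrite mulf_div -!rmorphM /= (barK_frac _ _ (mulf_neq0 q0 s0)) (barK_frac _ _ q0) (barK_frac _ _ s0).
by rewrite mulf_div -!evM.
Qed.

HB.instance Definition _ := GRing.isZmodMorphism.Build K K barK barB.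
HB.instance Definition _ := GRing.isMonoidMorphism.Build K K barK barMul.

Lemma bar_tK : barK tK = tK^-1.
Proof. by rewrite /tK barK_tofrac evX. Qed.

Lemma bar_test (x : K) : barK (x^-1 * 2%:R) = (barK x)^-1 * 2%:R.
Proof. by rewrite rmorphM fmorphV rmorph_nat. Qed.




Lemma z7a : (2%:R ^+ 3 : 'Z_7) = 1. Proof. by apply/eqP; vm_compute. Qed.
Lemma z7b : (1 + 2%:R + 2%:R ^+ 2 : 'Z_7) = 0. Proof. by apply/eqP; vm_compute. Qed.
Lemma z7c (r r' : nat) : (r < 3)%N -> (r' < 3)%N -> (2%:R ^+ r : 'Z_7) = 2%:R ^+ r' -> r = r'.
Proof. by case: r => [|[|[|]]] //; case: r' => [|[|[|]]] // _ _ /eqP; vm_compute. Qed.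
Lemma z7d (r r' : nat) : (r < 3)%N -> (r' < 3)%N -> (2%:R ^+ r : 'Z_7) = - 2%:R ^+ r' -> False.
Proof. by case: r => [|[|[|]]] //; case: r' => [|[|[|]]] // _ _ /eqP; vm_compute. Qed.
Lemma z7e n : (2%:R ^+ n : 'Z_7) = 2%:R ^+ (n %% 3).
Proof. by rewrite {1}(divn_eq n 3) exprD mulnC exprM z7a expr1n mul1r. Qed.

Definition e7 (p : {poly int}) : 'Z_7 := intr (p.[2]).
Lemma e7B p q : e7 (p - q) = e7 p - e7 q.
Proof. by rewrite /e7 hornerD hornerN rmorphB. Qed.
Lemma e7M p q : e7 (p * q) = e7 p * e7 q.
Proof. by rewrite /e7 hornerM rmorphM. Qed.
Lemma e7Xn n : e7 'X^n = 2%:R ^+ n.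
Proof. by rewrite /e7 hornerXn rmorphXn. Qed.
Lemma e7Phi : e7 (1 + 'X + 'X^2) = 0.
Proof. by rewrite /e7 !hornerE; apply/eqP; vm_compute. Qed.

Lemma tKn_neq0 n : tK ^+ n != 0.
Proof. exact: expf_neq0 tK_neq0. Qed.

Lemma D_neq0 : 1 + tK + tK ^+ 2 != 0.
Proof.
rewrite /tK -tofrac1 -rmorphXn -!rmorphD /= tofrac_eq0.
apply/negP => /eqP /(congr1 (fun p : {poly rat} => p`_2)).
by rewrite !coefD coef1 coefX coefXn coef0 /= !add0r =>/eqP; rewrite oner_eq0.
Qed.

Lemma evXn n : ev 'X^n = tK^-1 ^+ n.
Proof.
elim: n => [|n IH]; first by rewrite !expr0 ev1.
by rewrite !exprS evM evX IH.
Qed.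

Lemma tofracX : tofrac 'X = tK. Proof. by []. Qed.

Lemma laurent_unit (c : K) : c * barK c = 1 ->
  laurent ((1 - c) / (1 + tK + tK ^+ 2)) -> exists k : int, c = (tK ^+ 3) ^ k.
Proof.
move=> hc [q [n hq]].
change (map_poly (fun z : int => z%:~R : rat) q) with (map_poly (intr : int -> rat) q) in hq.
set mq := map_poly (intr : int -> rat) q in hq.
pose Phi : {poly rat} := 1 + 'X + 'X^2.
have DPhi : 1 + tK + tK ^+ 2 = tofrac Phi.
  rewrite /Phi !rmorphD rmorph1 rmorphXn; reflexivity.
pose P := 'X^n - Phi * mq.
have cP : c = tofrac P / tofrac ('X^n).
  rewrite (@c_form _ _ _ _ _ D_neq0 (tKn_neq0 n) hq) DPhi /P rmorphB rmorphM !rmorphXn.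
  reflexivity.
have Xn0 : ('X^n : {poly rat}) != 0 by rewrite monic_neq0 ?monicXn.
have hb : barK c = ev P * tK ^+ n.
  by rewrite cP (barK_frac _ _ Xn0) evXn exprVn invrK.
have h1 : tofrac P * ev P = 1.
  rewrite -hc hb {1}cP rmorphXn /= -/tK mulrACA mulVf ?mulr1 //.
  exact: tKn_neq0.
set d := (size P).-1.
pose rP : {poly rat} := \sum_(i < size P) P`_i *: 'X^(d - i).
have h2 : P * rP = 'X^d.
  apply/eqP; rewrite -tofrac_eq rmorphM rmorphXn /= -/tK -ev_rev.
  by rewrite mulrA h1 mul1r.
have hdv : P %| 'X^d by rewrite -h2 dvdp_mulr.
have hdv' : P %| ('X - 0%:P) ^+ d by rewrite polyC0 subr0.
case/dvdp_exp_XsubCP: hdv' => k _; rewrite polyC0 subr0 => hE.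
case/eqpP: hE => [[c1 c2] /andP [c10 c20] /= hP].
set a := c1^-1 * c2.
have Pa : P = a%:P * 'X^k.
  by rewrite mul_polyC /a -scalerA -hP scalerA mulVf // scale1r.
have haa : a * a = 1.
  move: h1; rewrite Pa evM evC evXn rmorphM rmorphXn /= -/tK mulrACA.
  rewrite exprVn mulfV ?tKn_neq0 // mulr1 -rmorphM /= -polyCM.
  move/eqP; rewrite -tofrac1K tofrac_eq -polyC1 (inj_eq polyC_inj) => /eqP.
  done.
pose pp : {poly int} := 'X^n - (1 + 'X + 'X^2) * q.
have mpp : map_poly (intr : int -> rat) pp = P.
  by rewrite /pp /P /mq /Phi rmorphB rmorphM !rmorphD rmorph1 /= !map_polyXn map_polyX.
have minj := map_inj_poly (@intr_inj rat) (rmorph0 _).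
have e7pp : e7 pp = 2%:R ^+ n by rewrite /pp e7B e7M e7Phi mul0r subr0 e7Xn.
have : a ^+ 2 == 1 by rewrite expr2 haa.
rewrite sqrf_eq1 => /orP [] /eqP ha.
- have ppk : pp = 'X^k.
    apply: minj; rewrite mpp Pa ha mul1r.
    by rewrite map_polyXn.
  have hnk : (n %% 3 = k %% 3)%N.
    apply: z7c; rewrite ?ltn_mod // -!z7e -e7pp ppk e7Xn //.
  have cE : c = tK ^+ k / tK ^+ n.
    by rewrite cP Pa ha mul1r !rmorphXn.
  case: (leqP n k) => hle.
  + set m := ((k - n) %/ 3)%N.
    exists m.
    have hk : k = (n + m * 3)%N by rewrite /m; lia.
    rewrite cE hk exprD mulrC mulKf ?tKn_neq0 //.
    by rewrite /exprz mulnC exprM.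
  + set m := ((n - k) %/ 3)%N.
    exists (- m%:Z).
    have hn : n = (k + m * 3)%N by rewrite /m; lia.
    rewrite cE hn exprD invfM mulrA mulfV ?tKn_neq0 // mul1r.
    by rewrite -exprnN mulnC exprM.
- have ppk : pp = - 'X^k.
    apply: minj; rewrite mpp Pa ha polyCN polyC1 mulN1r.
    by rewrite rmorphN /= map_polyXn.
  exfalso.
  have e7N : e7 (- 'X^k) = - 2%:R ^+ k by rewrite -sub0r e7B e7Xn /e7 horner0 rmorph0 sub0r.
  apply: (@z7d (n %% 3) (k %% 3)); rewrite ?ltn_mod //.
  by rewrite -!z7e -e7pp ppk e7N.
Qed.



Lemma t1K : 1 + tK != 0.
Proof.
rewrite /tK -tofrac1 -rmorphD /= tofrac_eq0 addrC -(opprK 1) -polyCN polyXsubC_eq0 //.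
Qed.

Notation McK := (Mc K tK).

Lemma McK_pow c k : c != 0 -> McK c ^ k = McK (c ^ k).
Proof.
move=> c0.
have pos : forall n, McK c ^+ n = McK (c ^+ n).
  elim=> [|n IH]; first by rewrite !expr0 Mc1.
  by rewrite !exprS IH -mulmxE (@McM K tK D_neq0).
case: k => n /=; first exact: pos.
rewrite /exprz /= pos.
set x := McK (c ^+ n.+1); set y := McK (c ^- n.+1).
have cn : c ^+ n.+1 != 0 by exact: expf_neq0.
have xy : x * y = 1 by rewrite -mulmxE (@McM K tK D_neq0) mulfV // Mc1.
have yx : y * x = 1 by rewrite -mulmxE (@McM K tK D_neq0) mulVf // Mc1.
have hu : x \is a GRing.unit by apply/unitrP; exists y.
by rewrite -[RHS]mul1r -(mulVr hu) -mulrA xy mulr1.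
Qed.

Lemma beta_DeltaE : beta_Delta = McK (tK ^+ 3).
Proof. exact: (@Delta_Mc K tK D_neq0). Qed.

Lemma barM_Mc c : barM (McK c) = Mb K tK (barK c).
Proof.
apply/matrixP => i j; rewrite !mxE.
rewrite rmorphD !rmorphM rmorph_nat rmorphB rmorph1 fmorphV rmorphXn !rmorphD rmorph1 rmorphXn /= bar_tK.
by [].
Qed.

Theorem corollary3p12 (A : 'M[K]_3) :
  in_B A -> (in_ker_phibar A <-> exists k : int, A = beta_Delta ^ k).
Proof.
move=> [hGL [hv [h1 hU]]]; split.
- case=> c [c0 hphi].
  have eA : A = McK c := @solve_Mc K tK tK_neq0 t1K D_neq0 A c hv h1 hphi.
  have cc : c * barK c = 1.
    apply: (@unit_Mc K tK tK_neq0 t1K D_neq0).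
    by rewrite -barM_Mc -eA.
  have hl := hGL.1 (Ordinal (isT : (1 < 3)%N)) ord0.
  rewrite eA mxE /= mul0r add0r expr0 mulr1 in hl.
  have [k ck] := @laurent_unit c cc hl.
  exists k; rewrite eA beta_DeltaE McK_pow ?ck //.
  exact: tKn_neq0.
- case=> k ->.
  exists ((tK ^+ 3) ^ k); split; first exact: expfz_neq0 (tKn_neq0 3).
  rewrite beta_DeltaE McK_pow; last exact: tKn_neq0.
  exact: (@phiMc K tK tK_neq0 t1K D_neq0).
Qed.
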